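(* Let $k\ge1$ be an integer, let $G=(V,E)$ be an undirected graph with edges partitioned into unsafe edges $\mathscr{U}$ and safe edges $\mathscr{S}$ and with nonnegative costs $\{c_e\}_{e\in E}$, let $r\in V$, and let $F\subseteq E$ be a feasible solution for $k$-FGC. Consider the digraph $D=(V,A)$ where, for each unsafe edge $e=uv\in F\cap\mathscr{U}$, $A$ contains one bidirected pair $\{(u,v),(v,u)\}$ arising from $e$, and for each safe edge $e=uv\in F\cap\mathscr{S}$, $A$ contains $k+1$ (distinct, parallel) bidirected pairs arising from $e$; each arc is given the cost of the edge it arises from. Then $D$ contains an $r$-out $(k+1)$-arborescence of cost at most $(k+1)c(F)$.
   Context: $F\subseteq E$ is feasible for $k$-FGC if for every $X\subseteq F\cap\mathscr{U}$ with $|X|\le k$, the subgraph $(V,F\setminus X)$ is connected; $c(F)=\sum_{e\in F}c_e$. An $r$-out arborescence $(V,T)$ in $D$ is a subgraph such that the undirected version of $T$ is acyclic and for every $v\in V\setminus\{r\}$ there is a directed $r\to v$ path in $(V,T)$. An $r$-out $(k+1)$-arborescence is a subgraph $(V,T)$ of $D$ whose arc set can be partitioned into $k+1$ arc-disjoint $r$-out arborescences; its cost is the sum of the costs of its arcs. *)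

(* Defs.v *)
From mathcomp Require Import all_boot all_order all_algebra.
Set Implicit Arguments. Unset Strict Implicit. Unset Printing Implicit Defensive.
Import Order.TTheory GRing.Theory Num.Theory.

(* Undirected multigraph G = (V, E): each edge e has endpoints ends e = (u, v).
   Unsafe edges form the set U; safe edges are its complement. *)

Section Defs.
Variables (V E : finType) (ends : E -> V * V).

Definition adj (F : {set E}) : rel V :=
  fun x y => [exists e in F, ((ends e).1 == x) && ((ends e).2 == y)
                          || ((ends e).1 == y) && ((ends e).2 == x)].

Definition connectedE (F : {set E}) : Prop := forall x y : V, connect (adj F) x y.

Definition feasible (U : {set E}) (k : nat) (F : {set E}) : Prop :=
  forall X : {set E}, X \subset F :&: U -> #|X| <= k -> connectedE (F :\: X).

(* Arcs of the digraph D: (e, i, b) is the i-th copy of the bidirected pair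
   arising from e, oriented u->v if b = false and v->u if b = true. *)
Definition Arc (k : nat) : finType := (E * 'I_k.+1 * bool)%type.
Definition arc_edge k (a : Arc k) : E := a.1.1.
Definition tail k (a : Arc k) : V :=
  if a.2 then (ends a.1.1).2 else (ends a.1.1).1.
Definition head k (a : Arc k) : V :=
  if a.2 then (ends a.1.1).1 else (ends a.1.1).2.

(* Arc set A of D: one pair (copy 0) for unsafe edges of F,
   k+1 pairs for safe edges of F. *)
Definition arcsD (U : {set E}) (k : nat) (F : {set E}) : {set Arc k} :=
  [set a : Arc k | (a.1.1 \in F) && ((a.1.1 \in U) ==> (val a.1.2 == 0%N))].

Definition darc k (T : {set Arc k}) : rel V :=
  fun x y => [exists a in T, (tail a == x) && (head a == y)].
Definition uarc k (T : {set Arc k}) : rel V :=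
  fun x y => [exists a in T, (tail a == x) && (head a == y)
                          || (tail a == y) && (head a == x)].

(* The undirected version of T is acyclic (a forest, loops and parallel
   pairs count as cycles): no arc lies on a cycle, i.e. for every arc its
   endpoints are not connected by the remaining arcs. *)
Definition uacyclic k (T : {set Arc k}) : Prop :=
  forall a, a \in T -> ~~ connect (uarc (T :\ a)) (tail a) (head a).

Definition r_out_arborescence k (r : V) (T : {set Arc k}) : Prop :=
  uacyclic T /\ forall v : V, v != r -> connect (darc T) r v.

Definition r_out_karb k (Aset : {set Arc k}) (r : V) (T : {set Arc k}) : Prop :=
  T \subset Aset /\
  exists P : 'I_k.+1 -> {set Arc k},
    [/\ (forall i j, i != j -> [disjoint P i & P j]),
        \bigcup_(i < k.+1) P i = T &
        forall i, r_out_arborescence r (P i)].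

End Defs.

(* Main.v *)
Require Import Defs.
From mathcomp Require Import all_boot all_order all_algebra.
Import Order.TTheory GRing.Theory Num.Theory.
Local Open Scope ring_scope.
Local Close Scope ring_scope.
From mathcomp Require Import all_boot all_order all_algebra.
From mathcomp Require Import zify.
Set Implicit Arguments. Unset Strict Implicit. Unset Printing Implicit Defensive.

Lemma connect_closedP (T : finType) (e : rel T) (C : {set T}) x y :
  (forall u v, u \in C -> e u v -> v \in C) -> x \in C -> connect e x y -> y \in C.
Proof.
move=> cl xC /connectP [p pth ->]; elim: p x xC pth => //= z p IH x xC /andP[exz pz].
exact: IH (cl _ _ xC exz) pz.
Qed.

Section Dig.
Variables (V E : finType) (ends : E -> V * V) (k : nat) (r : V).
Notation A := (Arc E k).
Notation tl := (Defs.tail ends).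
Notation hd := (Defs.head ends).

Definition enters (X : {set V}) (a : A) := (hd a \in X) && (tl a \notin X).
Definition rho (S : {set A}) (X : {set V}) := #|[set a in S | enters X a]|.
Definition valid (X : {set V}) := (r \notin X) && (X != set0).

Lemma rho_sub (S : {set A}) X :
  rho S X = \sum_(a in S) (enters X a : nat).
Proof. by rewrite /rho -sum1dep_card big_mkcondr /=; apply: eq_bigr => a _; case: (enters X a). Qed.

Lemma submod (S : {set A}) X Y :
  rho S (X :|: Y) + rho S (X :&: Y) <= rho S X + rho S Y.
Proof.
rewrite !rho_sub -!big_split /=; apply: leq_sum => a _.
rewrite /enters !inE; case: (hd a \in X); case: (hd a \in Y);
  case: (tl a \in X); case: (tl a \in Y) => //.
Qed.

Definition arb (B : {set A}) :=
  [/\ (forall a b, a \in B -> b \in B -> hd a = hd b -> a = b),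
      (exists rk : V -> nat, forall a, a \in B -> rk (tl a) < rk (hd a)) &
      (forall v, connect (darc ends B) r v)].


Lemma darc_mono (B B' : {set A}) : B \subset B' -> subrel (darc ends B) (darc ends B').
Proof.
move=> sBB' x y /existsP[a /andP[aB h]]; apply/existsP; exists a.
by rewrite (subsetP sBB' _ aB).
Qed.

Section Grow.
Variables (n : nat) (S : {set A}).
Hypothesis Hcut : forall X, valid X -> n < rho S X.

Record Inv (B : {set A}) (T : {set V}) : Prop := {
  i_sub : B \subset S;
  i_r : r \in T;
  i_in : forall a, a \in B -> (tl a \in T) && (hd a \in T);
  i_un : forall a b, a \in B -> b \in B -> hd a = hd b -> a = b;
  i_rk : exists rk : V -> nat, forall a, a \in B -> rk (tl a) < rk (hd a);
  i_reach : forall v, v \in T -> connect (darc ends B) r v;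
  i_rho : forall X, valid X -> n <= rho (S :\: B) X }.

Lemma rho_disj B T (X : {set V}) : Inv B T -> (forall x, x \in X -> x \notin T) ->
  rho (S :\: B) X = rho S X.
Proof.
move=> I dX; rewrite /rho; apply: eq_card => a; rewrite !inE.
case aB: (a \in B) => /=; last by [].
have /andP[_ hT] := i_in I aB.
rewrite /enters; case: (a \in S) => //=; case hX: (hd a \in X) => //=.
by move: (dX _ hX); rewrite hT.
Qed.

Lemma step B T : Inv B T -> (exists v, v \notin T) ->
  exists a, [/\ a \in S :\: B, tl a \in T, hd a \notin T &
     forall W, valid W -> rho (S :\: B) W = n -> ~~ enters W a].
Proof.
move=> I [v vT].
pose tight W := [&& valid W, rho (S :\: B) W == n & ~~ (W \subset T)].
case: (boolP [exists W, tight W]) => [exT | noT].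
- have exm : exists m, [exists W, tight W && (#|W| == m)].
    by case/existsP: exT => W tW; exists #|W|; apply/existsP; exists W; rewrite tW eqxx.
  case: (ex_minnP exm) => m /existsP[U /andP[tU /eqP cU]] minm.
  case/and3P: tU => /andP[rU U0] /eqP rhoU UT.
  have vY : valid (U :\: T).
    rewrite /valid inE (negbTE rU) andbF /=; apply/set0Pn.
    by case/subsetPn: UT => x xU xT; exists x; rewrite inE xU xT.
  have := Hcut vY; rewrite -(@rho_disj B T _ I); last by move=> x; rewrite inE => /andP[].
  move=> lt.
  have : ~~ ([set a in S :\: B | enters (U :\: T) a] \subset [set a in S :\: B | enters U a]).
    apply/negP => /subset_leq_card; rewrite -/(rho _ _) -/(rho _ _) rhoU.
    by move: lt; rewrite ltnNge => /negbTE ->.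
  case/subsetPn => a; rewrite !inE /enters !inE => /andP[aSB /andP[/andP[haT haU] tlY]].
  rewrite aSB haU /= negbK => tlU.
  move: tlY; rewrite tlU andbT negbK => tlT.
  exists a; split => //; first by rewrite inE aSB.
  move=> W /andP[rW W0] rhoW; apply/negP => /andP[haW tlW].
  have vI : valid (U :&: W).
    by rewrite /valid inE (negbTE rU) /=; apply/set0Pn; exists (hd a); rewrite inE haU haW.
  have vU : valid (U :|: W).
    by rewrite /valid inE (negbTE rU) (negbTE rW) /=; apply/set0Pn; exists (hd a); rewrite inE haU.
  have := submod (S :\: B) U W; rewrite rhoU rhoW.
  have := i_rho I vI; have := i_rho I vU => h1 h2 h3.
  have rI : rho (S :\: B) (U :&: W) = n.
    apply/eqP; rewrite eqn_leq h2 andbT -(leq_add2l n).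
    exact: leq_trans (leq_add h1 (leqnn _)) h3.
  have tI : tight (U :&: W).
    rewrite /tight vI rI eqxx /=; apply/subsetPn; exists (hd a) => //.
    by rewrite inE haU.
  have : m <= #|U :&: W|.
    by apply: minm; apply/existsP; exists (U :&: W); rewrite tI eqxx.
  have : #|U :&: W| < #|U|.
    apply: proper_card; apply/properP; split; first exact: subsetIl.
    by exists (tl a) => //; rewrite inE (negbTE tlW) andbF.
  by rewrite cU => lt1 le1; move: (leq_ltn_trans le1 lt1); rewrite ltnn.
- have vY : valid (~: T) by rewrite /valid inE (i_r I) /=; apply/set0Pn; exists v; rewrite inE.
  have := Hcut vY; rewrite -(@rho_disj B T _ I); last by move=> x; rewrite inE.
  move=> lt; have : 0 < rho (S :\: B) (~: T) by exact: leq_ltn_trans (leq0n n) lt.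
  rewrite card_gt0 => /set0Pn[a]; rewrite !inE /enters !inE negbK => /andP[aSB /andP[haT tlT]].
  exists a; split => //; first by rewrite inE aSB.
  move=> W vW rhoW; apply/negP => /andP[haW tlW].
  move/existsPn: noT => /(_ W); rewrite /tight vW rhoW eqxx /=.
  by case/subsetPn; exists (hd a).
Qed.

Lemma extend B T : Inv B T -> (exists v, v \notin T) ->
  exists a, Inv (a |: B) (hd a |: T) /\ #|~: (hd a |: T)| < #|~: T|.
Proof.
move=> I ex; case: (step I ex) => a [aSB tlT haT crit].
have aS : a \in S by move: aSB; rewrite inE => /andP[].
have aB : a \notin B by move: aSB; rewrite inE => /andP[].
exists a; split; last first.
  by rewrite setCU (cardsD1 (hd a) (~: T)) inE haT setIC -setDE.
case: (I) => sub rT inT un [rk hrk] reach hrho; split.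
- by rewrite subUset sub1set aS sub.
- by rewrite inE rT orbT.
- move=> b; rewrite !inE => /orP[/eqP -> | bB]; first by rewrite ?inE tlT eqxx orbT.
  by case/andP: (inT _ bB) => h1 h2; rewrite ?inE h1 h2 !orbT.
- have hB b : b \in B -> hd b != hd a.
    by move=> bB; case/andP: (inT _ bB) => _ h; apply/eqP => e; move: haT; rewrite -e h.
  move=> b1 b2; rewrite !inE => /orP[/eqP -> | b1B] /orP[/eqP -> | b2B] //.
  + by move=> e; move: (hB _ b2B); rewrite e eqxx.
  + by move=> e; move: (hB _ b1B); rewrite e eqxx.
  + exact: un.
- exists (fun x => if x == hd a then (rk (tl a)).+1 else rk x) => b; rewrite !inE.
  case/orP => [/eqP -> | bB].
    have -> : (tl a == hd a) = false by apply/negbTE/eqP => e; move: haT; rewrite -e tlT.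
    by rewrite eqxx.
  case/andP: (inT _ bB) => h1 h2.
  have -> : (tl b == hd a) = false by apply/negbTE/eqP => e; move: haT; rewrite -e h1.
  have -> : (hd b == hd a) = false by apply/negbTE/eqP => e; move: haT; rewrite -e h2.
  exact: hrk.
- have mono : subrel (darc ends B) (connect (darc ends (a |: B))).
    by move=> x y h; apply: connect1; apply: (darc_mono (subsetUr _ _)).
  move=> v; rewrite !inE => /orP[/eqP -> | vT]; last exact: (connect_sub mono) (reach _ vT).
  apply: connect_trans ((connect_sub mono) _ _ (reach _ tlT)) _.
  apply: connect1; apply/existsP; exists a; by rewrite !inE !eqxx.
- move=> X vX.
  have -> : rho (S :\: (a |: B)) X = #|[set b in S :\: B | enters X b] :\ a|.
    rewrite /rho; apply: eq_card => b; rewrite !inE.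
    by case: (b == a); rewrite ?andbF ?andFb //= ?negb_or ?andbT.
  set Z := [set b in S :\: B | enters X b].
  have hZ : (a \in Z) = enters X a by rewrite /Z !inE aB aS.
  have e : #|Z| = rho (S :\: B) X by [].
  have := cardsD1 a Z; rewrite hZ.
  case ea: (enters X a) => h.
    have hX := hrho X vX.
    have ne : rho (S :\: B) X != n by apply/eqP => e'; move: (crit X vX e'); rewrite ea.
    have lt : n < rho (S :\: B) X by rewrite ltn_neqAle eq_sym ne hX.
    by move: lt; rewrite -e h add1n ltnS.
  by move: (hrho X vX); rewrite -e h add0n.
Qed.
Lemma grow_aux m B T : #|~: T| <= m -> Inv B T ->
  exists B' : {set A}, [/\ B' \subset S, arb B' & forall X, valid X -> n <= rho (S :\: B') X].
Proof.
elim: m B T => [|m IH] B T hm I;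
  case: (boolP [exists v, v \notin T]) => [/existsP ex | /existsPn al].
- case: ex => v vT; move: hm; rewrite leqn0 => /eqP/cards0_eq/setP/(_ v).
  by rewrite !inE vT.
- exists B; split; [exact: i_sub I | split | exact: i_rho I].
  + exact: i_un I.
  + exact: i_rk I.
  + by move=> v; apply: (i_reach I); move: (al v); rewrite negbK.
- case: (extend I ex) => a [I' lt]; apply: (IH _ _ _ I').
  by rewrite -ltnS; apply: leq_trans lt hm.
- exists B; split; [exact: i_sub I | split | exact: i_rho I].
  + exact: i_un I.
  + exact: i_rk I.
  + by move=> v; apply: (i_reach I); move: (al v); rewrite negbK.
Qed.

Lemma grow : exists B : {set A}, [/\ B \subset S, arb B & forall X, valid X -> n <= rho (S :\: B) X].
Proof.
apply: (@grow_aux #|~: [set r]| set0 [set r] (leqnn _)); split.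
- exact: sub0set.
- by rewrite inE.
- by move=> a; rewrite in_set0.
- by move=> a b; rewrite in_set0.
- by exists (fun _ => 0) => a; rewrite in_set0.
- by move=> v; rewrite inE => /eqP ->.
- by move=> X vX; rewrite setD0; apply: ltnW; apply: Hcut.
Qed.
End Grow.
Lemma edmonds n (S : {set A}) : (forall X, valid X -> n <= rho S X) ->
  exists P : nat -> {set A}, [/\ forall i j, i < n -> j < n -> i != j -> [disjoint P i & P j],
    forall i, i < n -> P i \subset S & forall i, i < n -> arb (P i)].
Proof.
elim: n S => [|n IH] S Hc.
  by exists (fun _ => set0); split.
have [B [sBS aB hB]] := @grow n S Hc.
have [P [dP sP aP]] := IH _ hB.
have dis j : j < n -> [disjoint B & P j].
  move=> jn; rewrite disjoint_subset; apply/subsetP => x xB; rewrite inE.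
  by apply/negP => /(subsetP (sP j jn)); rewrite inE xB.
exists (fun i => if i is j.+1 then P j else B); split.
- case=> [|i] [|j] //= hi hj hij; first exact: dis.
    by rewrite disjoint_sym; exact: dis.
  exact: dP.
- case=> [|i] //= hi; apply: subset_trans (sP i hi) _; exact: subsetDl.
- by case=> [|i] //= hi; apply: aP.
Qed.

Lemma arb_inj (B : {set A}) : arb B ->
  {in B &, injective (@arc_edge E k)}.
Proof.
case=> un [rk hrk] _ a b aB bB e.
move: (hrk a aB) (hrk b bB) (un a b aB bB).
rewrite /arc_edge in e; rewrite /Defs.tail /Defs.head e.
case: a.2 b.2 => [] [] /=; first [by move=> _ _ h; apply: h|by move=> h1 h2; move: (ltn_trans h1 h2); rewrite ltnn].
Qed.

Lemma arb_rout (B : {set A}) : arb B -> r_out_arborescence ends r B.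
Proof.
case=> un [rk hrk] reach; split => //.
have mono x y : connect (darc ends B) x y -> rk x <= rk y.
  move=> cxy; pose C := [set z | rk x <= rk z].
  have cl u v : u \in C -> darc ends B u v -> v \in C.
    rewrite !inE => hu /existsP[b /and3P[bB /eqP tb /eqP hb]].
    by apply: leq_trans hu _; rewrite -tb -hb ltnW // hrk.
  have xC : x \in C by rewrite inE.
  by move: (connect_closedP cl xC cxy); rewrite inE.
move=> a aB; pose D := [set x | connect (darc ends B) (hd a) x].
have tlD : tl a \notin D.
  by rewrite inE; apply/negP => /mono; rewrite leqNgt hrk.
have parent z : z \in D -> z != hd a ->
    exists2 b, b \in B & (hd b == z) && (tl b \in D).
  move=> zD zh; case: (boolP [exists b in B, (hd b == z) && (tl b \in D)]) => [/exists_inP [b bB h] | /exists_inPn nb]; first by exists b.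
  exfalso.
  pose C := D :\ z.
  have cl u v : u \in C -> darc ends B u v -> v \in C.
    rewrite !inE => /andP[uz cu] /existsP[b /and3P[bB /eqP tb /eqP hb]].
    have cv : connect (darc ends B) (hd a) v.
      by apply: (connect_trans cu); apply: connect1; apply/existsP; exists b; rewrite bB tb hb !eqxx.
    rewrite cv andbT; apply/eqP => vz; move: (nb b bB); rewrite hb vz eqxx /= tb.
    by rewrite inE cu.
  have hC : hd a \in C by rewrite !inE eq_sym zh connect0.
  have cz : connect (darc ends B) (hd a) z by move: zD; rewrite inE.
  by move: (connect_closedP cl hC cz); rewrite !inE eqxx.
pose C := ~: D.
have cl u v : u \in C -> uarc ends (B :\ a) u v -> v \in C.
  rewrite !inE => uD /existsP[b /andP[]]; rewrite !inE => /andP[ba bB].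
  case/orP => /andP[/eqP tb /eqP hb]; apply/negP => vD.
  - case: (eqVneq v (hd a)) => [vh | vh].
      by move: ba; rewrite (un b a bB aB) ?eqxx // hb vh.
    have vD' : v \in D by rewrite inE.
    case: (parent v vD' vh) => b' b'B /andP[/eqP hb' tb'D].
    have e : b = b' by apply: un => //; rewrite hb hb'.
    by move: tb'D; rewrite -e tb inE (negbTE uD).
  - move: uD => /negP; apply.
    by apply: (connect_trans vD); apply: connect1; apply/existsP; exists b; rewrite bB tb hb !eqxx.
apply/negP => cc.
have tC : tl a \in C by rewrite inE.
by move: (connect_closedP cl tC cc); rewrite !inE connect0.
Qed.
End Dig.
Import Order.TTheory GRing.Theory Num.Theory.

Local Open Scope ring_scope.

Lemma cut_lemma (V E : finType) (ends : E -> V * V) (U : {set E}) (k : nat) (r : V)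
  (F : {set E}) : feasible ends U k F ->
  forall X, valid r X -> (k.+1 <= rho ends (arcsD U k F) X)%N.
Proof.
move=> feas X /andP[rX /set0Pn[x xX]].
pose cross e := ((ends e).1 \in X) != ((ends e).2 \in X).
pose bo e := (ends e).1 \in X.
have ent e (i : 'I_k.+1) : cross e -> enters ends X ((e, i, bo e) : Arc E k).
  rewrite /cross /enters /bo /Defs.head /Defs.tail /=.
  by case h1: ((ends e).1 \in X); case h2: ((ends e).2 \in X); rewrite /= ?h1 ?h2.
case: (boolP [exists e in F, cross e && (e \notin U)]).
- case/exists_inP => e eF /andP[ce eU].
  pose h := fun i : 'I_k.+1 => ((e, i, bo e) : Arc E k).
  have hinj : injective h by move=> i j [].
  rewrite -{1}(card_ord k.+1) -(card_imset _ hinj) /rho; apply: subset_leq_card.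
  apply/subsetP => a /imsetP[i _ ->]; rewrite !inE /= eF (negbTE eU) /=.
  exact: ent.
- move/exists_inPn => allU.
  pose C := [set e in F | cross e].
  have leC : (k < #|C|)%N.
    rewrite ltnNge; apply/negP => Ck.
    have sC : C \subset F :&: U.
      apply/subsetP => e; rewrite !inE => /andP[eF ce]; rewrite eF /=.
      by move: (allU e eF); rewrite ce /= negbK.
    have := feas C sC Ck r x.
    pose Y := ~: X.
    have cl u v : u \in Y -> adj ends (F :\: C) u v -> v \in Y.
      rewrite !inE => uX /existsP[e /andP[]]; rewrite !inE => /andP[eC eF].
      have nc : ~~ cross e by move: eC; rewrite eF.
      move: nc; rewrite /cross negbK => /eqP nc.
      case/orP => /andP[/eqP e1 /eqP e2].
        by rewrite -e2 -nc e1.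
      by rewrite -e1 nc e2.
    have rY : r \in Y by rewrite inE.
    by move=> c; move: (connect_closedP cl rY c); rewrite inE xX.
  apply: leq_trans leC _.
  pose h := fun e : E => ((e, ord0, bo e) : Arc E k).
  have hinj : injective h by move=> i j [].
  rewrite -(card_imset _ hinj) /rho; apply: subset_leq_card.
  apply/subsetP => a /imsetP[e eC ->]; rewrite /C inE in eC; case/andP: eC => eF ce.
  rewrite inE; apply/andP; split; last exact: ent.
  by rewrite inE /= eF implybT.
Qed.

Lemma sum_subset (R : realDomainType) (I : finType) (Y Z : {set I}) (f : I -> R) :
  (forall i, 0 <= f i) -> Y \subset Z -> \sum_(i in Y) f i <= \sum_(i in Z) f i.
Proof.
move=> f0 sYZ; rewrite [X in _ <= X](big_setID Y) /= (setIidPr sYZ) lerDl.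
by apply: sumr_ge0 => i _.
Qed.

Theorem lemma1 (R : realDomainType) (V E : finType) (ends : E -> V * V)
  (U : {set E}) (c : E -> R) (k : nat) (r : V) (F : {set E}) :
  (0 < k)%N ->
  (forall e, 0 <= c e) ->
  feasible ends U k F ->
  exists T : {set Arc E k},
    r_out_karb ends (arcsD U k F) r T /\
    \sum_(a in T) c (arc_edge a) <= (k.+1)%:R * \sum_(e in F) c e.
Proof.
move=> k0 c0 feas.
have [P [dP sP aP]] := @edmonds V E ends k r k.+1 (arcsD U k F) (cut_lemma feas).
exists (\bigcup_(i < k.+1) P i); split.
- split; first by apply/bigcupsP => i _; exact: sP.
  exists (fun i : 'I_k.+1 => P i); split => //.
  + by move=> i j ij; apply: dP => //.
  + by move=> i; apply: arb_rout; apply: aP.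
- rewrite partition_disjoint_bigcup; last first.
    by move=> i j ij; apply: dP.
  have -> : (k.+1)%:R * \sum_(e in F) c e = \sum_(i < k.+1) \sum_(e in F) c e.
    by rewrite sumr_const card_ord mulr_natl.
  apply: ler_sum => i _.
  rewrite -(big_imset _ (arb_inj (aP i (ltn_ord i)))) /=.
  apply: sum_subset => //; apply/subsetP => e /imsetP[a aP' ->].
  by move: (subsetP (sP i (ltn_ord i)) a aP'); rewrite inE => /andP[].
Qed.
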